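(* Let $n$ and $b$ be integers with $1\le b<\frac{n}{2}-1$, and let $BT\in\mathcal{CT}^*_{n,b}$. Then \[ M_2(BT)\le\begin{cases} 4n+16b-12 & \text{if } 1\le b\le\frac{n-4}{5},\\ 6n+6b-20 & \text{if } \frac{n-4}{5}<b<\frac{n-2}{3},\\ 10n-6b-28 & \text{if } \frac{n-2}{3}\le b<\frac{3n-4}{7},\\ 16n-20b-36 & \text{if } \frac{3n-4}{7}\le b<\frac{n}{2}-1. \end{cases} \] Equality holds if and only if $BT\in\mathcal{BT}'_1(n,b)$ when $1\le b<\frac{n-2}{3}$, and $BT\in\mathcal{BT}'_2(n,b)$ when $\frac{n-2}{3}\le b<\frac{n}{2}-1$.
   Context: A chemical tree is a tree with maximum degree at most $4$; $d_v$ is the degree of $v$. A pendent vertex has degree $1$; a branching vertex has degree greater than $2$. A pendent path is a path $u_0\cdots u_r$ ($r\ge1$) with $u_0$ pendent, $u_r$ branching and all internal vertices of degree $2$; an internal path is such a path with both end vertices branching and all internal vertices of degree $2$; its length is $r$. $\mathcal{CT}^*_{n,b}$ is the class of all $n$-vertex chemical trees with exactly $b$ branching vertices. For $1\le b<\frac{n-2}{3}$, $\mathcal{BT}_1(n,b)$ is the set of trees in $\mathcal{CT}^*_{n,b}$ whose degree sequence has $b$ entries $4$, $n-3b-2$ entries $2$ and $2b+2$ entries $1$; for $\frac{n-2}{3}\le b<\frac{n}{2}-1$, $\mathcal{BT}_2(n,b)$ is the set of trees in $\mathcal{CT}^*_{n,b}$ whose degree sequence has $n-2b-2$ entries $4$,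 $3b-n+2$ entries $3$ and $n-b$ entries $1$. $\mathcal{BT}'_1(n,b)$ and $\mathcal{BT}'_2(n,b)$ are the subclasses of $\mathcal{BT}_1(n,b)$ and $\mathcal{BT}_2(n,b)$, respectively, of trees satisfying all of: (1) every internal path (if any) has length $1$; (2) if some pendent vertex is adjacent to a vertex of degree $4$, then there are no two adjacent vertices of degree $3$; (3) if some pendent vertex is adjacent to a branching vertex, then there is no pendent path of length greater than $2$; (4) every vertex of degree $3$ (if any) has at most one neighbor of degree $4$; (5) there is at least one vertex of degree $4$ and the subgraph induced by the vertices of degree $4$ is a tree. The second Zagreb index is $M_2(G)=\sum_{uv\in E(G)}d_ud_v$. *)

(* Defs.v *)
From mathcomp Require Import all_boot all_order all_algebra.
Set Implicit Arguments. Unset Strict Implicit. Unset Printing Implicit Defensive.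

Section Graphs.
Variable T : finType.
Implicit Types (e : rel T) (S : {pred T}) (x v : T) (p : seq T).

Definition simple_graph e := symmetric e /\ irreflexive e.

Definition deg e v : nat := #|[pred u | e v u]|.

Definition pendent e v : bool := deg e v == 1.
Definition branching e v : bool := 2 < deg e v.

Definition restrict e S : rel T := [rel x y | [&& e x y, x \in S & y \in S]].

Definition is_cycle e x p : bool :=
  [&& path e x p, uniq (x :: p), 2 <= size p & e (last x p) x].

Definition connected_on e S :=
  forall u v, u \in S -> v \in S -> connect (restrict e S) u v.
Definition acyclic_on e S := forall x p, ~~ is_cycle (restrict e S) x p.

Definition is_tree_on e S := connected_on e S /\ acyclic_on e S.
Definition is_tree e := is_tree_on e predT.

Definition chemical_tree e := simple_graph e /\ is_tree e /\ forall v, deg e v <= 4.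

(* a (simple) path x :: p of length size p *)
Definition gpath e x p : bool := path e x p && uniq (x :: p).
Definition inner x p : seq T := behead (belast x p).

Definition pendent_path e x p : bool :=
  [&& gpath e x p, 1 <= size p, pendent e x, branching e (last x p)
    & all (fun w => deg e w == 2) (inner x p)].

Definition internal_path e x p : bool :=
  [&& gpath e x p, 1 <= size p, branching e x, branching e (last x p)
    & all (fun w => deg e w == 2) (inner x p)].

Definition ndeg e k : nat := #|[pred v | deg e v == k]|.

(* second Zagreb index: sum over edges uv of d_u d_v; each unordered edge
   {u,v} is counted once via an enumeration order on T *)
Definition M2 e : nat :=
  \sum_(u : T) \sum_(v : T | (enum_rank u < enum_rank v) && e u v) deg e u * deg e v.

(* conditions (1)-(5) defining BT'_1 and BT'_2 inside BT_1, BT_2 *)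
Definition prime_conditions e :=
  [/\ (forall x p, internal_path e x p -> size p = 1),
      ((exists u v, [&& pendent e u, e u v & deg e v == 4]) ->
                 ~ (exists u v, [&& e u v, deg e u == 3 & deg e v == 3])),
      ((exists u v, [&& pendent e u, e u v & branching e v]) ->
                 forall x p, pendent_path e x p -> size p <= 2),
      (forall v, deg e v == 3 ->
                 #|[pred u | e v u && (deg e u == 4)]| <= 1)
    & ((exists v, deg e v == 4) /\
                 is_tree_on e [pred v | deg e v == 4])].

End Graphs.

Definition CTstar (n b : nat) (e : rel 'I_n) :=
  chemical_tree e /\ #|[pred v | branching e v]| = b.
Arguments CTstar : clear implicits.

Definition BT1 (n b : nat) (e : rel 'I_n) :=
  [/\ CTstar n b e, ndeg e 4 = b, ndeg e 2 = n - 3 * b - 2 & ndeg e 1 = 2 * b + 2].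
Arguments BT1 : clear implicits.

Definition BT2 (n b : nat) (e : rel 'I_n) :=
  [/\ CTstar n b e, ndeg e 4 = n - 2 * b - 2, ndeg e 3 = 3 * b + 2 - n
    & ndeg e 1 = n - b].
Arguments BT2 : clear implicits.

Definition BT1' (n b : nat) (e : rel 'I_n) := BT1 n b e /\ prime_conditions e.
Arguments BT1' : clear implicits.
Definition BT2' (n b : nat) (e : rel 'I_n) := BT2 n b e /\ prime_conditions e.
Arguments BT2' : clear implicits.

(* Main.v *)
Require Import Defs.
From mathcomp Require Import all_boot all_order all_algebra.
From mathcomp Require Import zify.
Import GRing.Theory Num.Theory.
Set Implicit Arguments. Unset Strict Implicit. Unset Printing Implicit Defensive.

Section G.
Variable T : finType.
Variable e : rel T.
Hypothesis esym : symmetric e.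
Hypothesis eirr : irreflexive e.

Definition nb (S : {pred T}) v := #|[pred u | (u \in S) && e v u]|.
Definition E2 (S : {pred T}) := \sum_(u | u \in S) nb S u.

Lemma card_sum (P : pred T) : #|P| = \sum_u (P u : nat).
Proof.
rewrite -sum1_card big_mkcond /=; apply: eq_bigr => u _.
by rewrite unfold_in; case: (P u).
Qed.

Lemma nb_eq S S' v : S =i S' -> nb S v = nb S' v.
Proof. by move=> H; apply: eq_card => u; rewrite !inE H. Qed.

Lemma E2_eq S S' : S =i S' -> E2 S = E2 S'.
Proof.
move=> H; rewrite /E2 (eq_bigl _ _ H); apply: eq_bigr => u _; exact: nb_eq.
Qed.

Lemma nbU1 w S u : w \notin S -> nb [predU1 w & S] u = e u w + nb S u.
Proof.
move=> Hw; rewrite /nb (cardD1 w) !inE eqxx /=; congr (_ + _).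
apply: eq_card => z; rewrite !inE.
by case: (z =P w) => [->|] /=; rewrite ?(negbTE Hw).
Qed.

Lemma sum_sym_nb S w : \sum_(u | u \in S) (e u w : nat) = nb S w.
Proof.
rewrite /nb card_sum big_mkcond /=; apply: eq_bigr => u _.
by rewrite esym; case: (u \in S).
Qed.

Lemma E2U1 w S : w \notin S -> E2 [predU1 w & S] = E2 S + 2 * nb S w.
Proof.
move=> Hw.
have -> : E2 [predU1 w & S] = nb [predU1 w & S] w +
    \sum_(u | u \in S) nb [predU1 w & S] u.
  rewrite /E2 (bigD1 w) /=; last by rewrite !inE eqxx.
  congr (_ + _); apply: eq_bigl => u.
  by rewrite !inE; case: (u =P w) => [->|]; rewrite ?(negbTE Hw) ?andbF ?andbT.
rewrite nbU1 // eirr add0n.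
have -> : \sum_(u | u \in S) nb [predU1 w & S] u =
    \sum_(u | u \in S) (e u w + nb S u).
  by apply: eq_bigr => u _; rewrite nbU1.
rewrite big_split /= sum_sym_nb /E2; lia.
Qed.

Lemma nbD1 S v : nb [predD1 S & v] v = nb S v.
Proof.
apply: eq_card => u; rewrite !inE.
by case: (u =P v) => [->|]; rewrite ?eirr ?andbF.
Qed.

Lemma E2D1 S v : v \in S -> E2 S = E2 [predD1 S & v] + 2 * nb S v.
Proof.
move=> Hv; rewrite -(nbD1 S v) -E2U1; last by rewrite !inE eqxx.
apply: E2_eq => u; rewrite !inE; case: (u =P v) => [->|] //=.
Qed.

Lemma cardD1' (S S' : {pred T}) v : S' =i [predD1 S & v] -> v \in S -> #|S| = #|S'| + 1.
Proof. by move=> HS Hv; rewrite (cardD1 v) Hv addnC (eq_card HS). Qed.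

Lemma E2D1' (S S' : {pred T}) v : S' =i [predD1 S & v] -> v \in S -> E2 S = E2 S' + 2 * nb S v.
Proof. by move=> HS Hv; rewrite (E2D1 Hv) (E2_eq HS). Qed.

Lemma restrict_sub (S S' : {pred T}) : (forall x, x \in S' -> x \in S) ->
  subrel (restrict e S') (restrict e S).
Proof. by move=> H x y /and3P [? /H ? /H ?]; apply/and3P. Qed.

Lemma acyc_mono (S S' : {pred T}) : (forall x, x \in S' -> x \in S) ->
  acyclic_on e S -> acyclic_on e S'.
Proof.
move=> H Hac x p; apply/negP => /and4P [Hp Hu Hs Hl].
have := Hac x p; rewrite /is_cycle Hu Hs (sub_path (restrict_sub H) Hp) /=.
by rewrite (restrict_sub H Hl).
Qed.

Lemma path_restrict_all S x p : path (restrict e S) x p -> all (mem S) p.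
Proof.
elim: p x => //= y p IH x /andP [/and3P [_ _ Hy] Hp].
by rewrite Hy (IH _ Hp).
Qed.

Lemma path_restrict_e S x p : path (restrict e S) x p -> path e x p.
Proof. by apply: sub_path => a c /and3P []. Qed.

Lemma path_to_restrict S x p : path e x p -> all (mem S) (x :: p) ->
  path (restrict e S) x p.
Proof.
elim: p x => //= y p IH x /andP [Hxy Hp] /and3P [Hx Hy Ha].
by rewrite /restrict /= Hxy Hx Hy /= IH //= Hy.
Qed.

Lemma restrictT : restrict e predT =2 e.
Proof. by move=> x y; rewrite /restrict /= andbT. Qed.

Lemma chord (r : rel T) x p c : path r x p -> uniq (x :: p) -> c \in x :: p ->
  r (last x p) c -> c != last x p ->
  (exists q, is_cycle r c q) \/ (exists p', p = rcons p' (last x p) /\ c = last x p').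
Proof.
move=> Hp Hu Hc Hr Hne.
have [s1 [s2 E]] : exists s1 s2, x :: p = s1 ++ c :: s2.
  by case/splitPr: Hc => s1 s2; exists s1, s2.
have [Hp2 Hu2 Hl2 Hpre] : [/\ path r c s2, uniq (c :: s2), last x p = last c s2 &
     forall y, s2 = [:: y] -> exists p', p = rcons p' y /\ c = last x p'].
  case: s1 E => [|x' s1'] /= [Ex Ep]; subst.
    split; try done; by move=> y ->; exists [::].
  move: Hp; rewrite cat_path /= => /and3P [_ _ ->]; split=> //.
  - by move: Hu; rewrite -cat_cons cat_uniq /= => /and3P [_ _ /andP [-> ->]].
  - by rewrite last_cat.
  - by move=> y ->; exists (rcons s1' c); rewrite last_rcons -!cats1 -catA.
clear E; case: s2 Hp2 Hu2 Hl2 Hpre => [|y [|y' s2]] Hp2 Hu2 Hl2 Hpre.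
- by move: Hne; rewrite Hl2 eqxx.
- by right; move: (Hpre y erefl) => [p' [E1 E2]]; exists p'; rewrite Hl2.
- by left; exists [:: y, y' & s2]; apply/and4P; split => //; rewrite -Hl2.
Qed.

Lemma uniq_size_card (s : seq T) : uniq s -> size s <= #|T|.
Proof. by move=> Hu; rewrite -(card_uniqP Hu) max_card. Qed.

Lemma leaf S x : acyclic_on e S -> x \in S -> exists2 v, v \in S & nb S v <= 1.
Proof.
move=> Hac Hx.
suff H : forall k p x, #|T| - size p <= k -> path (restrict e S) x p ->
   uniq (x :: p) -> x \in S -> exists2 v, v \in S & nb S v <= 1.
  by apply: (H #|T| [::] x) => //; rewrite subn0.
elim=> [|k IH] p y Hk Hp Hu Hy.
  have := uniq_size_card Hu; rewrite /= => H; exfalso; move: Hk H; set t := #|T|; move=> Hk H; lia.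
have Hl : last y p \in S.
  case: (lastP p) Hp => [//|p' z] Hp.
  by move: (path_restrict_all Hp); rewrite last_rcons all_rcons => /andP [].
case: (leqP (nb S (last y p)) 1) => [Hle|Hgt]; first by exists (last y p).
have Hext : forall c, c \in S -> e (last y p) c -> c \notin y :: p ->
    exists2 v, v \in S & nb S v <= 1.
  move=> c Hc Hec Hn; apply: (IH (rcons p c) y).
  - by rewrite size_rcons; lia.
  - by rewrite rcons_path Hp /restrict /= Hec Hl Hc.
  - by rewrite -rcons_cons rcons_uniq Hn Hu.
  - exact: Hy.
case/card_gt1P: Hgt => c1 [c2 [Hc1 Hc2 Hne]].
move: Hc1 Hc2; rewrite !inE => /andP [Hc1S Hc1e] /andP [Hc2S Hc2e].
case: (boolP (c1 \in y :: p)) => Hi1; last exact: (Hext c1).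
case: (boolP (c2 \in y :: p)) => Hi2; last exact: (Hext c2).
have Hr : forall c, c \in S -> e (last y p) c -> restrict e S (last y p) c.
  by move=> c Hc Hec; rewrite /restrict /= Hec Hl Hc.
have Hn : forall c, e (last y p) c -> c != last y p.
  by move=> c Hec; apply/eqP => Ec; move: Hec; rewrite Ec eirr.
case: (chord Hp Hu Hi1 (Hr _ Hc1S Hc1e) (Hn _ Hc1e)) => [[q Hq]|[p1 [E1 F1]]].
  by move: (Hac c1 q); rewrite Hq.
case: (chord Hp Hu Hi2 (Hr _ Hc2S Hc2e) (Hn _ Hc2e)) => [[q Hq]|[p2 [E2 F2]]].
  by move: (Hac c2 q); rewrite Hq.
have Ep : p1 = p2 by move: E1; rewrite E2 => /rcons_inj [].
by move: Hne; rewrite F1 F2 Ep eqxx.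
Qed.


Lemma nb_ge1 S v u : u \in S -> e v u -> 0 < nb S v.
Proof. by move=> Hu Hvu; apply/card_gt0P; exists u; rewrite !inE Hu Hvu. Qed.

Lemma nb_ge2 S v u w : u \in S -> e v u -> w \in S -> e v w -> u != w -> 1 < nb S v.
Proof.
by move=> Hu Hvu Hw Hvw Hne; apply/card_gt1P; exists u, w; rewrite !inE Hu Hvu Hw Hvw.
Qed.

Lemma connect_mono (S S' : {pred T}) a c : (forall x, x \in S' -> x \in S) ->
  connect (restrict e S') a c -> connect (restrict e S) a c.
Proof.
move=> H; apply: connect_sub => x y Hxy; apply: connect1; exact: restrict_sub Hxy.
Qed.

Lemma restrict_sym S : symmetric (restrict e S).
Proof. by move=> x y; rewrite /restrict /= esym [(x \in S) && _]andbC. Qed.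

Lemma forest_ind k (S : {pred T}) : #|S| = k -> acyclic_on e S -> (exists x, x \in S) ->
  E2 S + 2 <= 2 * #|S| /\ (E2 S + 2 = 2 * #|S| <-> connected_on e S).
Proof.
elim: k S => [|k IH] S Hk Hac [x Hx].
  by move: (card0_eq Hk x); rewrite Hx.
have [v Hv Hleaf] := leaf Hac Hx.
pose S' : {pred T} := [predD1 S & v].
have HS'e : S' =i [predD1 S & v] by [].
have HE := E2D1' HS'e Hv; have Hc := cardD1' HS'e Hv.
have HS'S : forall z, z \in S' -> z \in S by move=> z; rewrite !inE => /andP [].
case: (pickP [pred u | u \in S']) => [u Hu|Hnone].
- have HS' : #|S'| = k by lia.
  have [IHb IHiff] := IH S' HS' (acyc_mono HS'S Hac) (ex_intro _ u Hu).
  have Hu' : u != v /\ u \in S by move: Hu; rewrite /= !inE => /andP [].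
  case: Hu' => Huv HuS.
  split; first by rewrite HE Hc; lia.
  split.
  + move=> Heq.
    have Hnb : nb S v = 1 by rewrite HE Hc in Heq; lia.
    have Hcon' : connected_on e S' by apply/IHiff; rewrite HE Hc in Heq; lia.
    have [w Hw] : exists w, w \in [pred u | (u \in S) && e v u].
      by apply/card_gt0P; rewrite -/(nb S v) Hnb.
    move: Hw; rewrite !inE => /andP [HwS Hvw].
    have HwS' : w \in S'.
      by rewrite !inE HwS andbT; apply/eqP => Ew; move: Hvw; rewrite Ew eirr.
    have Hto : forall a, a \in S -> connect (restrict e S) a w.
      move=> a Ha; case: (a =P v) => [->|/eqP Hav].
        by apply: connect1; rewrite /restrict /= Hvw Hv HwS.
      apply: (connect_mono HS'S); apply: Hcon' => //.
      by rewrite !inE Hav Ha.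
    move=> a c Ha Hc'.
    apply: connect_trans (Hto a Ha) _.
    by rewrite (sym_connect_sym (restrict_sym S)); apply: Hto.
  + move=> Hcon.
    have Hnb1 : 0 < nb S v.
      case/connectP: (Hcon v u Hv HuS) => p Hp Hlast.
      case: p Hp Hlast => [|h p] /=; first by move=> _ Euv; move: Huv; rewrite Euv eqxx.
      by case/andP => /and3P [Hvh _ HhS] _ _; apply: (nb_ge1 HhS Hvh).
    have Hcon' : connected_on e S'.
      move=> a c Ha Hc'.
      have HaS := HS'S _ Ha; have HcS := HS'S _ Hc'.
      case/connectP: (Hcon a c HaS HcS) => p0 Hp0 Ec.
      move: Hc'; rewrite Ec; case/shortenP: Hp0 => p Hp Hu2 _ Hc'.
      have Hall : all (mem S') (a :: p).
        rewrite /= Ha /=.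
        apply/allP => z Hz; rewrite /= !inE.
        have HzS : z \in S by move: (path_restrict_all Hp) => /allP; apply.
        rewrite HzS andbT; apply/eqP => Ezv; subst z.
        case/splitPr: Hz Hp Hu2 Hc' => s1 s2 Hp Hu2 Hc'.
        case: s2 Hp Hu2 Hc' => [|h s2] Hp Hu2 Hc'.
          by move: Hc'; rewrite last_cat /= !inE eqxx.
        move: Hp; rewrite cat_path /= => /and3P [_ /and3P [Hpv Hpred _] /andP [/and3P [Hvh _ HhS] _]].
        have Hne : last a s1 != h.
          move: Hu2; rewrite -cat_cons cat_uniq => /and3P [_ Hdis _].
          apply/eqP => E; move: Hdis; rewrite -E /=.
          by rewrite negb_or mem_last andbF.
        have := nb_ge2 Hpred (etrans (esym _ _) Hpv) HhS Hvh Hne.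
        by rewrite ltnNge Hleaf.
      apply/connectP; exists p => //.
      apply: path_to_restrict => //; exact: path_restrict_e Hp.
    have H1 := proj2 IHiff Hcon'.
    rewrite HE Hc; clear -H1 Hnb1 Hleaf; lia.
- have HS0 : #|S'| = 0 by apply: eq_card0 => z; rewrite !inE; move: (Hnone z); rewrite !inE.
  have HE0 : E2 S' = 0.
    by rewrite /E2 big_pred0 // => z; move: (Hnone z); rewrite !inE.
  have Hn0 : nb S v = 0.
    rewrite -(nbD1 S v) -(nb_eq v HS'e); apply: eq_card0 => z; rewrite !inE.
    by move: (Hnone z); rewrite !inE => ->.
  have Honly : forall a, a \in S -> a = v.
    by move=> a Ha; apply/eqP; move: (Hnone a); rewrite !inE Ha andbT => /negbT; rewrite negbK.
  split; first by rewrite HE Hc HS0 HE0 Hn0.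
  split=> [_|_]; last by rewrite HE Hc HS0 HE0 Hn0.
  by move=> a c Ha Hc'; rewrite (Honly a Ha) (Honly c Hc') connect0.
Qed.

Lemma forest (S : {pred T}) : acyclic_on e S -> (exists x, x \in S) ->
  E2 S + 2 <= 2 * #|S| /\ (E2 S + 2 = 2 * #|S| <-> connected_on e S).
Proof. exact: (forest_ind erefl). Qed.

End G.


Section Tree.
Variable T : finType.
Variable e : rel T.
Hypothesis esym : symmetric e.
Hypothesis eirr : irreflexive e.
Hypothesis conn : connected_on e predT.
Hypothesis acyc : acyclic_on e predT.
Hypothesis Tbig : 3 <= #|T|.

Lemma nbT v : nb e predT v = deg e v.
Proof. by apply: eq_card => u; rewrite !inE. Qed.

Lemma acyc_all (S : {pred T}) : acyclic_on e S.
Proof. by apply: (acyc_mono (S := predT)). Qed.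

Lemma acyc_e x q : ~~ is_cycle e x q.
Proof.
apply/negP => /and4P [Hp Hu Hs Hl]; move: (acyc x q); rewrite /is_cycle.
by rewrite (eq_path (restrictT e)) Hp Hu Hs restrictT Hl.
Qed.

Lemma conn_e a c : connect e a c.
Proof.
rewrite -(eq_connect (restrictT e)); exact: conn.
Qed.

Lemma some_vertex : exists x : T, x \in predT.
Proof. apply/card_gt0P; move: Tbig; rewrite cardT; set t := size _ => H; lia. Qed.

Lemma sum_deg : \sum_u deg e u + 2 = 2 * #|T|.
Proof.
have [_ H] := forest esym eirr (acyc_all predT) some_vertex.
have := proj2 H conn; rewrite /E2.
rewrite (eq_bigr (fun u => deg e u)); last by move=> u _; rewrite nbT.
by [].
Qed.


Lemma nbr_list a (s : seq T) c : deg e a = size s -> uniq s -> all (e a) s -> e a c -> c \in s.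
Proof.
move=> Hd Hu Ha Hc.
have Hsub : mem s \subset [pred z | e a z] by apply/subsetP => z Hz; rewrite inE (allP Ha).
have Hcard : #|mem s| = #|[pred z | e a z]| by rewrite (card_uniqP Hu) -Hd.
by have /subset_cardP/(_ Hsub) := Hcard => /(_ c); rewrite !inE Hc => ->.
Qed.

Lemma closed_all (L : seq T) x z : (forall a c, a \in L -> e a c -> c \in L) -> x \in L -> z \in L.
Proof.
move=> Hcl Hx; case/connectP: (conn_e x z) => p Hp ->.
elim: p x Hx Hp => //= y p IH x Hx /andP [Hxy Hp].
exact: (IH y (Hcl x y Hx Hxy) Hp).
Qed.

Lemma deg_ge1 u : 1 <= deg e u.
Proof.
have [v Hv] : exists v, v \in predC1 u.
  apply/card_gt0P; rewrite cardC1; lia.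
move: Hv; rewrite !inE => Hvu.
case/connectP: (conn_e u v) => [[|h p]] /=; first by move=> _ E; move: Hvu; rewrite E eqxx.
by case/andP => Huh _ _; apply/card_gt0P; exists h.
Qed.

Lemma no11 u v : e u v -> deg e u = 1 -> deg e v = 1 -> False.
Proof.
move=> Huv Hu Hv.
have Huv' : u != v by apply/eqP => E; move: Huv; rewrite E eirr.
have Hcl : forall a c, a \in [:: u; v] -> e a c -> c \in [:: u; v].
  move=> a c; rewrite !inE => /orP [] /eqP -> Hac.
  - have : c \in [:: v] by apply: (nbr_list (a := u)) => //=; rewrite Huv.
    by rewrite !inE => ->; rewrite orbT.
  - have : c \in [:: u] by apply: (nbr_list (a := v)) => //=; rewrite esym Huv.
    by rewrite !inE => ->.
have Hall : forall z, z \in [:: u; v].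
  move=> z. have Hu0 : u \in [:: u; v] by rewrite !inE eqxx.
  exact: (closed_all z Hcl Hu0).
have : #|T| <= 2.
  have H2 : #|mem [:: u; v]| = 2 by rewrite (card_uniqP _) //= !inE Huv'.
  rewrite -H2; by apply: subset_leq_card; apply/subsetP => z _; apply: Hall.
lia.
Qed.


Lemma E2U1' (S S1 : {pred T}) w : S1 =i [predU1 w & S] -> w \notin S ->
  E2 e S1 = E2 e S + 2 * nb e S w.
Proof. by move=> H Hw; rewrite (E2_eq e H) (E2U1 esym eirr Hw). Qed.

Lemma cardU1' (S S1 : {pred T}) w : S1 =i [predU1 w & S] -> w \notin S -> #|S1| = #|S| + 1.
Proof. by move=> H Hw; rewrite (eq_card H) cardU1 Hw addnC. Qed.

Lemma nobypass q (S : {pred T}) x y : E2 e S + 2 = 2 * #|S| -> x \in S -> y \in S ->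
  path e x (rcons q y) -> uniq (x :: rcons q y) -> all (fun z => z \notin S) q ->
  q != [::] -> False.
Proof.
elim: q S x => [//|w q IH] S x HE Hx Hy /= /andP [Hxw Hp] Hu /andP [HwS Hall] _.
pose S1 : {pred T} := [predU1 w & S].
have HS1 : S1 =i [predU1 w & S] by [].
have HE1 := E2U1' HS1 HwS; have Hc1 := cardU1' HS1 HwS.
have Hw1 : w \in S1 by rewrite !inE eqxx.
have [Hb1 _] := forest esym eirr (acyc_all S1) (ex_intro _ w Hw1).
have Hge1 : 0 < nb e S w by apply: (nb_ge1 Hx); rewrite esym.
case: q IH Hp Hu Hall => [|w' q] IH Hp Hu Hall.
  move: Hp => /= /andP [Hwy _].
  have Hxy : x != y by move: Hu; rewrite /= !inE negb_or => /andP [/andP [_ ->]].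
  have H2 := nb_ge2 Hx (etrans (esym _ _) Hxw) Hy Hwy Hxy.
  move: Hb1; rewrite HE1 Hc1 => Hb1; clear -Hb1 H2 HE; lia.
apply: (IH S1 w) => //.
- move: Hb1; rewrite HE1 Hc1 => Hb1; clear -Hb1 Hge1 HE; lia.
- by rewrite !inE Hy orbT.
- by case/andP: Hu.
- apply/allP => z Hz; rewrite !inE negb_or (allP Hall z Hz) andbT.
  apply/eqP => Ez; move: Hu; rewrite -Ez /= => /andP [_ /andP [Hn _]].
  by move: Hn; rewrite -rcons_cons mem_rcons inE Hz orbT.
Qed.


Lemma rev_gpath x P y : path e x (rcons P y) -> uniq (x :: rcons P y) ->
  path e y (rcons (rev P) x) /\ uniq (y :: rcons (rev P) x).
Proof.
move=> Hp Hu; split.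
  have := rev_path e x (rcons P y); rewrite last_rcons belast_rcons rev_cons => ->.
  by rewrite (eq_path (e' := e)) // => a c; rewrite /= esym.
by rewrite -rev_cons -rev_rcons rev_uniq.
Qed.

Lemma walk_ind k x p : #|T| - size p <= k -> path e x p -> uniq (x :: p) -> p != [::] ->
  all (fun z => deg e z == 2) p ->
  exists q y, [/\ path e x (p ++ rcons q y), uniq (x :: p ++ rcons q y),
     all (fun z => deg e z == 2) q & deg e y != 2].
Proof.
elim: k p => [|k IH] p Hk Hp Hu Hne Hall.
  have := uniq_size_card Hu; rewrite /= => H; exfalso; move: Hk H; set t := #|T|; lia.
case/lastP: p Hk Hp Hu Hne Hall => [//|p' y0] Hk Hp Hu _ Hall.
have Hy0 : deg e y0 = 2 by move: Hall; rewrite all_rcons => /andP [/eqP].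
move: (Hp); rewrite rcons_path => /andP [Hp' Hzy].
set z := last x p' in Hzy.
have [c Hc] : exists c, c \in [predD1 [pred u | e y0 u] & z].
  apply/card_gt0P; move: (cardD1 z [pred u | e y0 u]).
  rewrite /deg in Hy0; rewrite Hy0 !inE esym Hzy.
  move=> H; move: H; set t := #|_|; move=> H; lia.
move: Hc; rewrite !inE => /andP [Hcz Hyc].
have Hcn : c \notin x :: rcons p' y0.
  apply/negP => Hin.
  have Hne' : c != last x (rcons p' y0).
    by rewrite last_rcons; apply/eqP => E; move: Hyc; rewrite E eirr.
  have Hr : e (last x (rcons p' y0)) c by rewrite last_rcons.
  case: (chord Hp Hu Hin Hr Hne') => [[q Hq]|[p2 [E2 F2]]].
    by move: (acyc_e c q); rewrite Hq.
  move: E2; rewrite last_rcons => /rcons_inj [E3]; subst p2.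
  by move: Hcz; rewrite F2 eqxx.
case: (boolP (deg e c == 2)) => Hdc.
  have := IH (rcons (rcons p' y0) c).
  case.
  - by rewrite size_rcons; clear -Hk; lia.
  - by rewrite rcons_path Hp last_rcons Hyc.
  - by rewrite -rcons_cons rcons_uniq Hcn Hu.
  - by case: (p').
  - by rewrite all_rcons Hdc Hall.
  move=> q [y [H1 H2 H3 H4]]; exists (c :: q), y.
  by rewrite -cat_rcons; split => //=; rewrite Hdc.
exists [::], c; rewrite cats1; split => //.
- by rewrite rcons_path Hp last_rcons Hyc.
- by rewrite -rcons_cons rcons_uniq Hcn Hu.
Qed.

Lemma walk x p : path e x p -> uniq (x :: p) -> p != [::] ->
  all (fun z => deg e z == 2) p ->
  exists q y, [/\ path e x (p ++ rcons q y), uniq (x :: p ++ rcons q y),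
     all (fun z => deg e z == 2) q & deg e y != 2].
Proof. by apply: (@walk_ind #|T|); rewrite leq_subr. Qed.


Lemma closed_path x P y : path e x (rcons P y) -> uniq (x :: rcons P y) ->
  deg e x = 1 -> deg e y = 1 -> all (fun z => deg e z == 2) P ->
  forall a c, a \in x :: rcons P y -> e a c -> c \in x :: rcons P y.
Proof.
move=> Hp Hu Hx Hy HP a c Ha Hac.
have [s1 [s2 E]] : exists s1 s2, x :: rcons P y = s1 ++ a :: s2.
  by case/splitPr: Ha => s1 s2; exists s1, s2.
case: s1 E => [|x' s1'] /= [Ex Er].
  subst a; case Er2 : (rcons P y) Hp => [|h t] Hp'.
    by move: Er2; case: (P).
  move: Hp' => /= /andP [Hxh _].
  have : c \in [:: h] by apply: (nbr_list (a := x)) => //=; rewrite Hxh.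
  by rewrite !inE => /eqP ->; rewrite eqxx orbT.
subst x'.
have Hpr : last x s1' \in x :: rcons P y by rewrite Er -cat_cons mem_cat mem_last.
move: Hp; rewrite Er cat_path /= => /and3P [_ Hpa Hp2].
case: s2 Er Hp2 => [|h s2] Er Hp2.
  move: Er; rewrite cats1 => /rcons_inj [_ Eay]; subst a.
  have : c \in [:: last x s1'] by apply: (nbr_list (a := y)) => //=; rewrite esym Hpa.
  rewrite !inE => /eqP ->; move: (mem_last x s1'); rewrite !inE mem_rcons !inE => /orP [->|->]; by rewrite ?orbT.
move: Hp2 => /= /andP [Hah _].
have Hu' := Hu; rewrite Er -cat_cons cat_uniq in Hu'.
case/and3P: Hu' => _ Hdis Hu2.
have Hyl : y = last h s2 by move: (congr1 (last x) Er); rewrite last_rcons last_cat /=.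
have Hay : a != y.
  by apply/eqP => Eay; move: Hu2; rewrite /= Eay {1}Hyl mem_last.
have HaP : a \in P.
  have : a \in rcons P y by rewrite Er mem_cat inE eqxx orbT.
  by rewrite mem_rcons inE (negbTE Hay).
have Hda : deg e a = 2 by apply/eqP; apply: (allP HP).
have Hne : last x s1' != h.
  apply/eqP => Eh; move/hasPn: Hdis => /(_ h).
  have Hh : h \in a :: h :: s2 by rewrite !inE eqxx orbT.
  by move/(_ Hh); rewrite -Eh mem_last.
have : c \in [:: last x s1'; h].
  apply: (nbr_list (a := a)) => //=; first by rewrite !inE Hne.
  by rewrite esym Hpa Hah.
rewrite !inE => /orP [] /eqP ->.
- by move: (mem_last x s1'); rewrite !inE mem_cat => /orP [->|->]; rewrite ?orbT.
- by rewrite mem_cat !inE eqxx !orbT.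
Qed.


Lemma inner_rcons (x : T) P y : inner x (rcons P y) = P.
Proof. by rewrite /inner belast_rcons. Qed.

Lemma pend_or_branch v : deg e v <= 4 -> deg e v != 2 -> pendent e v \/ branching e v.
Proof.
move=> H4 H2; have := deg_ge1 v; rewrite /pendent /branching.
case: (deg e v) H4 H2 => [|[|[|k]]] //=; by [left | right].
Qed.

Lemma walk_contra w1 w2 : e w1 w2 -> deg e w1 = 2 -> deg e w2 = 2 ->
  (forall v, deg e v <= 4) -> (exists z, branching e z) ->
  (forall x p, internal_path e x p -> size p = 1) ->
  (forall x p, pendent_path e x p -> size p <= 2) -> False.
Proof.
move=> Hw Hd1 Hd2 H4 [z Hz] Hint Hpen.
have Hw12 : w1 != w2 by apply/eqP => E; move: Hw; rewrite E eirr.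
have G1 : path e w1 [:: w2] by rewrite /= Hw.
have G2 : uniq [:: w1; w2] by rewrite /= !inE Hw12.
have G3 : all (fun z => deg e z == 2) [:: w2] by rewrite /= Hd2.
have [q1 [y2 [H1 H2 H3 H4']]] := walk G1 G2 erefl G3.
have [R1 R2] := @rev_gpath w1 (w2 :: q1) y2 H1 H2.
set p := rcons (rev (w2 :: q1)) w1 in R1 R2.
have Hpall : all (fun z => deg e z == 2) p.
  by rewrite /p all_rcons all_rev /= Hd1 Hd2 H3.
have Hpne : p != [::] by rewrite /p; case: (rev _).
have [q2 [y1 [K1 K2 K3 K4]]] := walk R1 R2 Hpne Hpall.
set P := p ++ q2.
have KP1 : path e y2 (rcons P y1) by rewrite /P rcons_cat.
have KP2 : uniq (y2 :: rcons P y1) by rewrite /P rcons_cat.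
have KP3 : all (fun z => deg e z == 2) P by rewrite /P all_cat Hpall K3.
have KP4 : 2 <= size P by rewrite /P size_cat /p size_rcons size_rev /= addSn ltnS leq_addr.
case: (pend_or_branch (H4 y2) H4') => Hy2; case: (pend_or_branch (H4 y1) K4) => Hy1.
- have Hcl := closed_path KP1 KP2 (eqP Hy2) (eqP Hy1) KP3.
  have Hy2in : y2 \in y2 :: rcons P y1 by rewrite inE eqxx.
  have := closed_all z Hcl Hy2in.
  rewrite inE mem_rcons inE => /or3P [/eqP Ez|/eqP Ez|Hz'].
  + by move: Hz Hy2; rewrite Ez /branching /pendent => H /eqP E; move: H; rewrite E.
  + by move: Hz Hy1; rewrite Ez /branching /pendent => H /eqP E; move: H; rewrite E.
  + by move: Hz; rewrite /branching (eqP (allP KP3 _ Hz')).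
- have := Hpen y2 (rcons P y1).
  rewrite /pendent_path /gpath KP1 KP2 Hy2 last_rcons Hy1 inner_rcons KP3 !size_rcons.
  by move=> /(_ erefl) H; clear -H KP4; lia.
- have [L1 L2] := rev_gpath KP1 KP2.
  have := Hpen y1 (rcons (rev P) y2).
  rewrite /pendent_path /gpath L1 L2 Hy1 last_rcons Hy2 inner_rcons all_rev KP3 !size_rcons size_rev.
  by move=> /(_ erefl) H; clear -H KP4; lia.
- have := Hint y2 (rcons P y1).
  rewrite /internal_path /gpath KP1 KP2 Hy2 last_rcons Hy1 inner_rcons KP3 !size_rcons.
  by move=> /(_ erefl) H; clear -H KP4; lia.
Qed.

End Tree.


Section Count.
Variable T : finType.
Variable e : rel T.
Hypothesis esym : symmetric e.
Hypothesis eirr : irreflexive e.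
Hypothesis Hdeg : forall v, 1 <= deg e v <= 4.

Definition mm i j := \sum_u \sum_v ((e u v) && (deg e u == i) && (deg e v == j) : nat).

Lemma deg_cases x : 1 <= x <= 4 -> x = 1 \/ x = 2 \/ x = 3 \/ x = 4.
Proof. by case: x => [|[|[|[|[|x]]]]] //=; auto. Qed.

Lemma card_sumT (P : pred T) : #|P| = \sum_u (P u : nat).
Proof.
rewrite -sum1_card big_mkcond /=; apply: eq_bigr => u _.
by rewrite unfold_in; case: (P u).
Qed.

Lemma vsplit (g : nat -> nat) : \sum_u g (deg e u) =
  g 1 * ndeg e 1 + g 2 * ndeg e 2 + g 3 * ndeg e 3 + g 4 * ndeg e 4.
Proof.
rewrite /ndeg !card_sumT !big_distrr -!big_split /=.
apply: eq_bigr => u _.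
by case: (deg_cases (Hdeg u)) => [->|[->|[->|->]]] /=; rewrite ?muln0 ?muln1 ?addn0 ?add0n.
Qed.

Lemma esplit (g : nat -> nat -> nat) : \sum_u \sum_v e u v * g (deg e u) (deg e v) =
  g 1 1 * mm 1 1 + g 1 2 * mm 1 2 + g 1 3 * mm 1 3 + g 1 4 * mm 1 4 +
  g 2 1 * mm 2 1 + g 2 2 * mm 2 2 + g 2 3 * mm 2 3 + g 2 4 * mm 2 4 +
  g 3 1 * mm 3 1 + g 3 2 * mm 3 2 + g 3 3 * mm 3 3 + g 3 4 * mm 3 4 +
  g 4 1 * mm 4 1 + g 4 2 * mm 4 2 + g 4 3 * mm 4 3 + g 4 4 * mm 4 4.
Proof.
rewrite /mm.
rewrite !big_distrr -!big_split /=; apply: eq_bigr => u _.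
rewrite !big_distrr -!big_split /=; apply: eq_bigr => v _.
case: (e u v) => /=; last by rewrite !muln0.
by case: (deg_cases (Hdeg u)) => [->|[->|[->|->]]];
   case: (deg_cases (Hdeg v)) => [->|[->|[->|->]]] /=; rewrite ?muln0 ?muln1 ?addn0 ?add0n ?mul1n.
Qed.


Lemma deg_sum u : deg e u = \sum_v (e u v : nat).
Proof. by rewrite /deg card_sumT. Qed.

Lemma M2_sym : 2 * M2 e = \sum_u \sum_v e u v * (deg e u * deg e v).
Proof.
pose X u v := e u v * (deg e u * deg e v).
have HX : forall u v, X u v = X v u by move=> u v; rewrite /X esym [deg e u * _]mulnC.
have Hsplit : forall u v, X u v = (enum_rank u < enum_rank v) * X u v + (enum_rank v < enum_rank u) * X u v.
  move=> u v; case: (ltngtP (enum_rank u) (enum_rank v)) => //= [_|_|E]; rewrite ?mul1n ?mul0n ?addn0 //.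
  have Euv : u = v by apply: enum_rank_inj; apply: val_inj.
  by rewrite /X Euv eirr.
change (2 * M2 e = \sum_u \sum_v X u v).
rewrite (eq_bigr (fun u => \sum_v ((enum_rank u < enum_rank v) * X u v + (enum_rank v < enum_rank u) * X u v))); last first.
  by move=> u _; apply: eq_bigr => v _; rewrite -Hsplit.
rewrite (eq_bigr (fun u => \sum_v ((enum_rank u < enum_rank v) * X u v) + \sum_v ((enum_rank v < enum_rank u) * X u v))); last first.
  by move=> u _; rewrite big_split.
rewrite big_split /=.
rewrite [X in _ = _ + X](exchange_big) /=.
have -> : \sum_v \sum_u (enum_rank v < enum_rank u) * X u v = \sum_v \sum_u (enum_rank v < enum_rank u) * X v u.
  by apply: eq_bigr => v _; apply: eq_bigr => u _; rewrite HX.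
rewrite addnn -mul2n; congr (2 * _).
rewrite /M2; apply: eq_bigr => u _.
rewrite big_mkcond /=; apply: eq_bigr => v _.
by rewrite /X; case: (enum_rank u < enum_rank v); case: (e u v); rewrite /= ?mul1n ?mul0n.
Qed.

Lemma E2_sum (S : {pred T}) : E2 e S = \sum_u \sum_v e u v * ((u \in S) * (v \in S)).
Proof.
rewrite /E2 big_mkcond /=; apply: eq_bigr => u _.
rewrite /nb card_sumT; case: (u \in S); last by rewrite big1 // => v _; rewrite muln0.
by apply: eq_bigr => v _; rewrite !inE; case: (v \in S); case: (e u v).
Qed.

Lemma row_sum k : 1 <= k <= 4 -> \sum_u \sum_v e u v * (deg e u == k) = k * ndeg e k.
Proof.
move=> Hk; rewrite (eq_bigr (fun u => (deg e u == k) * deg e u)); last first.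
  by move=> u _; rewrite deg_sum big_distrr /=; apply: eq_bigr => v _; rewrite mulnC.
rewrite (vsplit (fun x => (x == k) * x)).
by case: (deg_cases Hk) => [->|[->|[->|->]]]; rewrite /= ?mul0n ?mul1n ?add0n ?addn0 ?muln0.
Qed.

Lemma mm_sym i j : mm i j = mm j i.
Proof.
rewrite /mm exchange_big /=; apply: eq_bigr => u _; apply: eq_bigr => v _.
by rewrite esym andbAC -andbA andbC -!andbA [(deg e u == _) && _]andbC.
Qed.

End Count.


Section Struct.
Variable T : finType.
Variable e : rel T.
Hypothesis esym : symmetric e.
Hypothesis eirr : irreflexive e.
Hypothesis conn : connected_on e predT.
Hypothesis acyc : acyclic_on e predT.
Hypothesis Tbig : 3 <= #|T|.
Hypothesis Hdeg : forall v, 1 <= deg e v <= 4.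

Lemma mm_pos u v i j : e u v -> deg e u = i -> deg e v = j -> 0 < mm e i j.
Proof.
move=> Huv Hu Hv; rewrite /mm (bigD1 u) //= (bigD1 v) //= Huv Hu Hv !eqxx /=.
by rewrite addnC addnCA.
Qed.

Lemma mm_ex i j : 0 < mm e i j -> exists u v, [/\ e u v, deg e u = i & deg e v = j].
Proof.
move=> H.
case: (boolP [exists u, exists v, (e u v) && (deg e u == i) && (deg e v == j)]).
  by case/existsP => u /existsP [v /andP [/andP [H1 /eqP H2] /eqP H3]]; exists u, v.
move=> Hn; move: H; rewrite /mm big1 // => u _; rewrite big1 // => v _.
case: (boolP ((e u v) && (deg e u == i) && (deg e v == j))) => // Hb.
by move: Hn; rewrite negb_exists => /forallP /(_ u); rewrite negb_exists => /forallP /(_ v); rewrite Hb.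
Qed.

Lemma no_deg k v : ndeg e k = 0 -> deg e v != k.
Proof. by move=> H; move: (card0_eq H v); rewrite !inE => ->. Qed.

Lemma some_deg k : 0 < ndeg e k -> exists v, deg e v == k.
Proof. by case/card_gt0P => v; rewrite inE => H; exists v. Qed.

Let B : {pred T} := [pred v | branching e v].
Let F : {pred T} := [pred v | deg e v == 4].

Lemma L_int_B : E2 e B + 2 = 2 * #|B| -> forall x p, internal_path e x p -> size p = 1.
Proof.
move=> HE x p /and5P [/andP [Hp Hu] Hs Hx Hy Hin].
case/lastP: p Hp Hu Hs Hy Hin => [//|q y] Hp Hu _ Hy Hin.
rewrite last_rcons in Hy.
rewrite size_rcons; case: q Hp Hu Hin => [//|w q] Hp Hu Hin.
exfalso.
apply: (nobypass esym eirr acyc HE (x := x) (y := y) (q := w :: q)) => //.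
rewrite inner_rcons in Hin; apply/allP => z Hz; rewrite !inE /branching.
by rewrite (eqP (allP Hin z Hz)).
Qed.

Lemma L_nodeg2_int : (forall v, deg e v != 2) -> forall x p, internal_path e x p -> size p = 1.
Proof.
move=> H x p /and5P [_ Hs _ _ Hin].
case/lastP: p Hs Hin => [//|q y] _; rewrite inner_rcons size_rcons.
by case: q => [//|w q] /= /andP [Hw _]; move: (H w); rewrite Hw.
Qed.

Lemma L_nodeg2_pen : (forall v, deg e v != 2) -> forall x p, pendent_path e x p -> size p <= 2.
Proof.
move=> H x p /and5P [_ Hs _ _ Hin].
case/lastP: p Hs Hin => [//|q y] _; rewrite inner_rcons size_rcons.
by case: q => [//|w q] /= /andP [Hw _]; move: (H w); rewrite Hw.
Qed.

Lemma L_pen3 x p : pendent_path e x p -> 3 <= size p ->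
  exists u v, [/\ e u v, deg e u = 2 & deg e v = 2].
Proof.
move=> /and5P [/andP [Hp _] _ _ _ Hin].
case/lastP: p Hp Hin => [//|q y] Hp; rewrite inner_rcons size_rcons.
case: q Hp => [|a [|b q]] //= /andP [_ /andP [Hab _]] /and3P [/eqP Ha /eqP Hb _] _.
by exists a, b.
Qed.

Lemma L_4 w : E2 e F + 2 = 2 * #|F| -> deg e w == 3 ->
  #|[pred u | e w u && (deg e u == 4)]| <= 1.
Proof.
move=> HE Hw; rewrite leqNgt; apply/negP => /card_gt1P [x [y [Hx Hy Hxy]]].
move: Hx Hy; rewrite !inE => /andP [Hwx Hx] /andP [Hwy Hy].
apply: (nobypass esym eirr acyc HE (x := x) (y := y) (q := [:: w])) => //.
- by rewrite /= esym Hwx Hwy.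
- have Hxw : x != w by apply/eqP => E; move: Hw; rewrite -E (eqP Hx).
  have Hwy' : w != y by apply/eqP => E; move: Hw; rewrite E (eqP Hy).
  by rewrite /= !inE negb_or Hxw Hxy Hwy'.
- by rewrite /= !inE (eqP Hw).
Qed.

Lemma L_5 : (exists v, deg e v == 4) -> E2 e F + 2 = 2 * #|F| -> is_tree_on e F.
Proof.
move=> [v Hv] HE; have [_ H] := forest esym eirr (acyc_all acyc F) (ex_intro _ v Hv).
by split; [apply/H | apply: acyc_all].
Qed.

Lemma L_5' : is_tree_on e F -> (exists v, deg e v == 4) -> E2 e F + 2 = 2 * #|F|.
Proof.
move=> [Hc _] [v Hv]; have [_ H] := forest esym eirr (acyc_all acyc F) (ex_intro _ v Hv).
by apply/H.
Qed.


Lemma PC1 : E2 e B + 2 = 2 * #|B| -> ndeg e 3 = 0 -> E2 e F + 2 = 2 * #|F| ->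
  (exists v, deg e v == 4) ->
  ((exists u v, [&& pendent e u, e u v & branching e v]) ->
     forall x p, pendent_path e x p -> size p <= 2) ->
  prime_conditions e.
Proof.
move=> HB H3 HF H4 Hpen; split.
- exact: L_int_B.
- by move=> _ [u [v /and3P [_ Hu _]]]; move: (no_deg u H3); rewrite Hu.
- exact: Hpen.
- by move=> v Hv; move: (no_deg v H3); rewrite Hv.
- by split; [ | apply: L_5].
Qed.

Lemma PC2 : ndeg e 2 = 0 -> E2 e F + 2 = 2 * #|F| -> (exists v, deg e v == 4) ->
  ((exists u v, [&& pendent e u, e u v & deg e v == 4]) ->
     ~ (exists u v, [&& e u v, deg e u == 3 & deg e v == 3])) ->
  prime_conditions e.
Proof.
move=> H2 HF H4 Hc2; split.
- by apply: L_nodeg2_int => v; apply: no_deg.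
- exact: Hc2.
- by move=> _; apply: L_nodeg2_pen => v; apply: no_deg.
- by move=> v Hv; apply: L_4.
- by split; [ | apply: L_5].
Qed.

Lemma PCinv_F : prime_conditions e -> E2 e F + 2 = 2 * #|F| /\ 0 < ndeg e 4.
Proof.
case=> _ _ _ _ [[v Hv] Ht]; split; first by apply: L_5' => //; exists v.
by apply/card_gt0P; exists v.
Qed.

Lemma PCinv_walk : prime_conditions e -> (exists z, branching e z) ->
  0 < mm e 1 4 -> 0 < mm e 2 2 -> False.
Proof.
case=> H1 _ H3 _ _ Hz /mm_ex [u [v [Huv Hu Hv]]] /mm_ex [w1 [w2 [Hw Hw1 Hw2]]].
have Hpen : forall x p, pendent_path e x p -> size p <= 2.
  by apply: H3; exists u, v; rewrite /pendent /branching Huv Hu Hv.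
apply: (walk_contra esym eirr conn acyc Tbig Hw Hw1 Hw2) => //.
by move=> x; case/andP: (Hdeg x).
Qed.

Lemma PCinv_33 : prime_conditions e -> 0 < mm e 1 4 -> mm e 3 3 = 0.
Proof.
case=> _ H2 _ _ _ /mm_ex [u [v [Huv Hu Hv]]].
have := H2 (ex_intro _ u (ex_intro _ v _)); rewrite /pendent Huv Hu Hv => /(_ erefl) Hn.
apply/eqP; rewrite -leqn0 leqNgt; apply/negP => /mm_ex [a [c [Hac Ha Hc]]].
by apply: Hn; exists a, c; rewrite Hac Ha Hc.
Qed.

End Struct.


Section Facts.
Variable T : finType.
Variable e : rel T.
Hypothesis esym : symmetric e.
Hypothesis eirr : irreflexive e.
Hypothesis conn : connected_on e predT.
Hypothesis acyc : acyclic_on e predT.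
Hypothesis Tbig : 3 <= #|T|.
Hypothesis Hdeg : forall v, 1 <= deg e v <= 4.

Lemma F_N : #|T| = ndeg e 1 + ndeg e 2 + ndeg e 3 + ndeg e 4.
Proof.
have := vsplit Hdeg (fun _ => 1); rewrite /= !mul1n => <-.
by rewrite (card_sumT predT).
Qed.

Lemma F_D : ndeg e 1 + 2 * ndeg e 2 + 3 * ndeg e 3 + 4 * ndeg e 4 + 2 = 2 * #|T|.
Proof.
rewrite -(sum_deg esym eirr conn acyc Tbig) (vsplit Hdeg id) /=.

lia.
Qed.

Lemma F_B : #|[pred v | branching e v]| = ndeg e 3 + ndeg e 4.
Proof.
rewrite card_sumT /branching.
by rewrite (vsplit Hdeg (fun x => (2 < x) : nat)) /= !mul0n !mul1n !add0n.
Qed.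

Lemma F_row k : 1 <= k <= 4 ->
  (1 == k) * mm e 1 1 + (1 == k) * mm e 1 2 + (1 == k) * mm e 1 3 + (1 == k) * mm e 1 4 +
  (2 == k) * mm e 2 1 + (2 == k) * mm e 2 2 + (2 == k) * mm e 2 3 + (2 == k) * mm e 2 4 +
  (3 == k) * mm e 3 1 + (3 == k) * mm e 3 2 + (3 == k) * mm e 3 3 + (3 == k) * mm e 3 4 +
  (4 == k) * mm e 4 1 + (4 == k) * mm e 4 2 + (4 == k) * mm e 4 3 + (4 == k) * mm e 4 4
  = k * ndeg e k.
Proof.
move=> Hk; rewrite -(row_sum Hdeg Hk); symmetry.
exact: (esplit Hdeg (fun i (_ : nat) => (i == k) : nat)).
Qed.

Lemma F_M : 2 * M2 e =
  mm e 1 1 + 2 * mm e 1 2 + 3 * mm e 1 3 + 4 * mm e 1 4 +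
  2 * mm e 2 1 + 4 * mm e 2 2 + 6 * mm e 2 3 + 8 * mm e 2 4 +
  3 * mm e 3 1 + 6 * mm e 3 2 + 9 * mm e 3 3 + 12 * mm e 3 4 +
  4 * mm e 4 1 + 8 * mm e 4 2 + 12 * mm e 4 3 + 16 * mm e 4 4.
Proof. rewrite (M2_sym esym eirr) (esplit Hdeg muln) /=; lia. Qed.

Lemma F_EB : E2 e [pred v | branching e v] = mm e 3 3 + mm e 3 4 + mm e 4 3 + mm e 4 4.
Proof.
rewrite E2_sum.
rewrite (eq_bigr (fun u => \sum_v e u v * (((2 < deg e u) : nat) * ((2 < deg e v) : nat)))); last first.
  by move=> u _; apply: eq_bigr => v _; rewrite !inE.
rewrite (esplit Hdeg (fun i j => ((2 < i) : nat) * ((2 < j) : nat))) /=.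
lia.
Qed.

Lemma F_EF : E2 e [pred v | deg e v == 4] = mm e 4 4.
Proof.
rewrite E2_sum.
rewrite (eq_bigr (fun u => \sum_v e u v * (((deg e u == 4) : nat) * ((deg e v == 4) : nat)))); last first.
  by move=> u _; apply: eq_bigr => v _; rewrite !inE.
rewrite (esplit Hdeg (fun i j => ((i == 4) : nat) * ((j == 4) : nat))) /=.
lia.
Qed.

Lemma F_11 : mm e 1 1 = 0.
Proof.
apply/eqP; rewrite -leqn0 leqNgt; apply/negP => /(mm_ex) [u [v [Huv Hu Hv]]].
by apply: (no11 (e:=e)) Huv Hu Hv.
Qed.

Lemma F_forestB : 0 < #|[pred v | branching e v]| ->
  E2 e [pred v | branching e v] + 2 <= 2 * #|[pred v | branching e v]| /\
  (E2 e [pred v | branching e v] + 2 = 2 * #|[pred v | branching e v]| <->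
     connected_on e [pred v | branching e v]).
Proof.
case/card_gt0P => v Hv.
exact: (forest esym eirr (acyc_all acyc _) (ex_intro _ v Hv)).
Qed.

Lemma F_forestF : ndeg e 4 = 0 \/ E2 e [pred v | deg e v == 4] + 2 <= 2 * ndeg e 4.
Proof.
case: (posnP (ndeg e 4)) => [->|H]; [by left | right].
case/card_gt0P: H => v Hv.
exact: (proj1 (forest esym eirr (acyc_all acyc _) (ex_intro _ v Hv))).
Qed.

End Facts.


Record Facts (n b M N1 N2 N3 N4 m11 m12 m13 m14 m21 m22 m23 m24 m31 m32 m33 m34 m41 m42 m43 m44 EB EF : nat) : Prop := MkFacts {
  HN : n = N1 + N2 + N3 + N4; HD : N1 + 2 * N2 + 3 * N3 + 4 * N4 + 2 = 2 * n;
  HB : b = N3 + N4;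
  R1 : m11 + m12 + m13 + m14 = N1; R2 : m21 + m22 + m23 + m24 = 2 * N2;
  R3 : m31 + m32 + m33 + m34 = 3 * N3; R4 : m41 + m42 + m43 + m44 = 4 * N4;
  S12 : m12 = m21; S13 : m13 = m31; S14 : m14 = m41; S23 : m23 = m32;
  S24 : m24 = m42; S34 : m34 = m43;
  HM : 2 * M = m11 + 2 * m12 + 3 * m13 + 4 * m14 + 2 * m21 + 4 * m22 + 6 * m23 + 8 * m24 +
      3 * m31 + 6 * m32 + 9 * m33 + 12 * m34 + 4 * m41 + 8 * m42 + 12 * m43 + 16 * m44;
  HEB : EB = m33 + m34 + m43 + m44; HEF : EF = m44; H11 : m11 = 0;
  HfB : EB + 2 <= 2 * b; HfF : N4 = 0 \/ EF + 2 <= 2 * N4;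
  Hb : 1 <= b; Hn : 2 * b + 2 < n }.

Section Arith.
Variables (n b M N1 N2 N3 N4 m11 m12 m13 m14 m21 m22 m23 m24 m31 m32 m33 m34 m41 m42 m43 m44 EB EF : nat).
Hypothesis HF : Facts n b M N1 N2 N3 N4 m11 m12 m13 m14 m21 m22 m23 m24 m31 m32 m33 m34 m41 m42 m43 m44 EB EF.

Local Open Scope ring_scope.

Lemma A1b : (5 * b + 4 <= n)%N -> M%:Z <= 4 * n%:Z + 16 * b%:Z - 12.
Proof. case: HF; intros; repeat split; intros; lia. Qed.
Lemma A1e : (5 * b + 4 <= n)%N -> M%:Z = 4 * n%:Z + 16 * b%:Z - 12 ->
  (((EB + 2 = 2 * b)%N) /\ (N3 = 0%N) /\ (N4 = b) /\ (N2 = (n - 3 * b - 2)%N) /\ (N1 = (2 * b + 2)%N) /\ (m13 = 0%N) /\ (m14 = 0%N) /\ ((EF + 2 = 2 * N4)%N)).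
Proof. case: HF; intros; repeat split; intros; lia. Qed.
Lemma A12r : N4 = b -> N2 = (n - 3 * b - 2)%N -> N1 = (2 * b + 2)%N -> (EF + 2 = 2 * N4)%N ->
  (m14 = 0%N \/ m22 = 0%N) ->
  (((5 * b + 4 <= n)%N -> M%:Z = 4 * n%:Z + 16 * b%:Z - 12) /\ ((n < 5 * b + 4)%N -> M%:Z = 6 * n%:Z + 6 * b%:Z - 20)).
Proof. case: HF; intros; repeat split; intros; lia. Qed.
Lemma A2b : (n < 5 * b + 4)%N -> M%:Z <= 6 * n%:Z + 6 * b%:Z - 20.
Proof. case: HF; intros; repeat split; intros; lia. Qed.
Lemma A2e : (n < 5 * b + 4)%N -> (3 * b + 2 < n)%N -> M%:Z = 6 * n%:Z + 6 * b%:Z - 20 ->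
  (((EB + 2 = 2 * b)%N) /\ (N3 = 0%N) /\ (N4 = b) /\ (N2 = (n - 3 * b - 2)%N) /\ (N1 = (2 * b + 2)%N) /\ (m22 = 0%N) /\ ((EF + 2 = 2 * N4)%N)).
Proof. case: HF; intros; repeat split; intros; lia. Qed.
Lemma A3b : (n <= 3 * b + 2)%N -> (7 * b + 4 < 3 * n)%N -> M%:Z <= 10 * n%:Z - 6 * b%:Z - 28.
Proof. case: HF; intros; repeat split; intros; lia. Qed.
Lemma A3e : (n <= 3 * b + 2)%N -> (7 * b + 4 < 3 * n)%N -> M%:Z = 10 * n%:Z - 6 * b%:Z - 28 ->
  ((N2 = 0%N) /\ (N4 = (n - 2 * b - 2)%N) /\ (N3 = (3 * b + 2 - n)%N) /\ (N1 = (n - b)%N) /\ (m33 = 0%N) /\ ((EF + 2 = 2 * N4)%N) /\ ((0 < N4)%N)).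
Proof. case: HF; intros; repeat split; intros; lia. Qed.
Lemma A4b : (3 * n <= 7 * b + 4)%N -> M%:Z <= 16 * n%:Z - 20 * b%:Z - 36.
Proof. case: HF; intros; repeat split; intros; lia. Qed.
Lemma A4e : (3 * n <= 7 * b + 4)%N -> M%:Z = 16 * n%:Z - 20 * b%:Z - 36 ->
  ((N2 = 0%N) /\ (N4 = (n - 2 * b - 2)%N) /\ (N3 = (3 * b + 2 - n)%N) /\ (N1 = (n - b)%N) /\ (m14 = 0%N) /\ ((EF + 2 = 2 * N4)%N) /\ ((0 < N4)%N)).
Proof. case: HF; intros; repeat split; intros; lia. Qed.
Lemma A34r : N4 = (n - 2 * b - 2)%N -> N3 = (3 * b + 2 - n)%N -> N1 = (n - b)%N ->
  (EF + 2 = 2 * N4)%N -> (m14 = 0%N \/ m33 = 0%N) -> (n <= 3 * b + 2)%N ->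
  (((7 * b + 4 < 3 * n)%N -> M%:Z = 10 * n%:Z - 6 * b%:Z - 28) /\ ((3 * n <= 7 * b + 4)%N -> M%:Z = 16 * n%:Z - 20 * b%:Z - 36)).
Proof. case: HF; intros; repeat split; intros; lia. Qed.
Lemma A34r2 : N4 = (n - 2 * b - 2)%N -> N3 = (3 * b + 2 - n)%N -> N1 = (n - b)%N -> N2 = 0%N.
Proof. case: HF; intros; repeat split; intros; lia. Qed.
Lemma A12r2 : (EF + 2 = 2 * N4)%N -> N4 = b -> N2 = (n - 3 * b - 2)%N -> N1 = (2 * b + 2)%N -> N3 = 0%N /\ (EB + 2 = 2 * b)%N.
Proof. case: HF; intros; repeat split; intros; lia. Qed.
End Arith.


Unset Implicit Arguments. Set Strict Implicit. Set Printing Implicit Defensive.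

Theorem theorem4 (n b : nat) (e : rel 'I_n) :
  1 <= b -> 2 * b + 2 < n -> CTstar n b e ->
  [/\ 5 * b + 4 <= n ->
        (((M2 e)%:Z <= 4 * n%:Z + 16 * b%:Z - 12)%R
         /\ (((M2 e)%:Z = 4 * n%:Z + 16 * b%:Z - 12 :> int)%R <-> BT1' n b e)),
      n < 5 * b + 4 -> 3 * b + 2 < n ->
        (((M2 e)%:Z <= 6 * n%:Z + 6 * b%:Z - 20)%R
         /\ (((M2 e)%:Z = 6 * n%:Z + 6 * b%:Z - 20 :> int)%R <-> BT1' n b e)),
      n <= 3 * b + 2 -> 7 * b + 4 < 3 * n ->
        (((M2 e)%:Z <= 10 * n%:Z - 6 * b%:Z - 28)%R
         /\ (((M2 e)%:Z = 10 * n%:Z - 6 * b%:Z - 28 :> int)%R <-> BT2' n b e))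
    & 3 * n <= 7 * b + 4 ->
        (((M2 e)%:Z <= 16 * n%:Z - 20 * b%:Z - 36)%R
         /\ (((M2 e)%:Z = 16 * n%:Z - 20 * b%:Z - 36 :> int)%R <-> BT2' n b e))].
Proof.
move=> Hb Hn Hct; have Hct0 := Hct.
case: Hct => [[[Hsym Hirr] [[Hconn Hacyc] H4]] Hbc].
have Tbig : 2 < #|'I_n| by rewrite card_ord; lia.
have Hdeg : forall v, 0 < deg e v <= 4 by move=> v; rewrite (deg_ge1 Hconn Tbig) H4.
have HB0 : 0 < #|[pred v | branching e v]| by rewrite Hbc.
have [HfB HiffB] := F_forestB Hsym Hirr Hacyc HB0.
have HF : Facts n b (M2 e) (ndeg e 1) (ndeg e 2) (ndeg e 3) (ndeg e 4)
   (mm e 1 1) (mm e 1 2) (mm e 1 3) (mm e 1 4) (mm e 2 1) (mm e 2 2) (mm e 2 3) (mm e 2 4)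
   (mm e 3 1) (mm e 3 2) (mm e 3 3) (mm e 3 4) (mm e 4 1) (mm e 4 2) (mm e 4 3) (mm e 4 4)
   (E2 e [pred v | branching e v]) (E2 e [pred v | deg e v == 4]).
  constructor.
  - by have := F_N Hdeg; rewrite card_ord.
  - by have := F_D Hsym Hirr Hconn Hacyc Tbig Hdeg; rewrite card_ord.
  - by rewrite -Hbc (F_B Hdeg).
  - by have := F_row Hdeg (k := 1) erefl; rewrite /=; lia.
  - by have := F_row Hdeg (k := 2) erefl; rewrite /=; lia.
  - by have := F_row Hdeg (k := 3) erefl; rewrite /=; lia.
  - by have := F_row Hdeg (k := 4) erefl; rewrite /=; lia.
  - exact: mm_sym Hsym 1 2.
  - exact: mm_sym Hsym 1 3.
  - exact: mm_sym Hsym 1 4.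
  - exact: mm_sym Hsym 2 3.
  - exact: mm_sym Hsym 2 4.
  - exact: mm_sym Hsym 3 4.
  - exact: F_M Hsym Hirr Tbig Hdeg.
  - exact: F_EB Hdeg.
  - exact: F_EF Hdeg.
  - exact: F_11 Hsym Hirr Hconn Tbig.
  - by rewrite -Hbc.
  - exact: F_forestF Hsym Hirr Hacyc.
  - exact: Hb.
  - exact: Hn.
have Hbr : exists z, branching e z by case/card_gt0P: HB0 => z; exists z.
have Hwalk : mm e 1 4 = 0 \/ mm e 2 2 = 0 -> True by [].
have Hpc_rev1 : prime_conditions e -> mm e 1 4 = 0 \/ mm e 2 2 = 0.
  move=> Hpc; case: (posnP (mm e 1 4)) => [->|H14]; first by left.
  case: (posnP (mm e 2 2)) => [->|H22]; first by right.
  by case: (PCinv_walk Hsym Hirr Hconn Hacyc Tbig Hdeg Hpc Hbr H14 H22).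
have Hpc_rev2 : prime_conditions e -> mm e 1 4 = 0 \/ mm e 3 3 = 0.
  move=> Hpc; case: (posnP (mm e 1 4)) => [->|H14]; first by left.
  by right; apply: PCinv_33 Hpc H14.
have Hex4 : 0 < ndeg e 4 -> exists v, deg e v == 4.
  by case/card_gt0P => v; rewrite inE => Hv; exists v.
have Hbranch : forall v, branching e v -> deg e v = 3 \/ deg e v = 4.
  move=> v; rewrite /branching; move: (H4 v); case: (deg e v) => [|[|[|[|[|k]]]]] //=; auto.
split.
- move=> H1; split; first exact: (A1b HF H1).
  split.
  + move=> Heq; have [EBt [N3z [N4b [N2e [N1e [m13z [m14z EFt]]]]]]] := A1e HF H1 Heq.
    split; first by split.
    apply: PC1 => //.
    * by rewrite Hbc.
    * by apply: Hex4; rewrite N4b.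
    * move=> [u [v /and3P [Hu Huv Hv]]]; exfalso.
      case: (Hbranch v Hv) => Hdv.
      - by move: (mm_pos Huv (eqP Hu) Hdv); rewrite m13z.
      - by move: (mm_pos Huv (eqP Hu) Hdv); rewrite m14z.
  + move=> [[_ H4' H2' H1'] Hpc].
    have [EFt _] := PCinv_F Hsym Hirr Hacyc Hpc.
    by have [A _] := A12r HF H4' H2' H1' EFt (Hpc_rev1 Hpc); apply: A.
- move=> H1 H2; split; first exact: (A2b HF H1).
  split.
  + move=> Heq; have [EBt [N3z [N4b [N2e [N1e [m22z EFt]]]]]] := A2e HF H1 H2 Heq.
    split; first by split.
    apply: PC1 => //.
    * by rewrite Hbc.
    * by apply: Hex4; rewrite N4b.
    * move=> _ x p Hp; rewrite leqNgt; apply/negP => Hs.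
      have [u [v [Huv Hu Hv]]] := L_pen3 Hp Hs.
      by move: (mm_pos Huv Hu Hv); rewrite m22z.
  + move=> [[_ H4' H2' H1'] Hpc].
    have [EFt _] := PCinv_F Hsym Hirr Hacyc Hpc.
    by have [_ A] := A12r HF H4' H2' H1' EFt (Hpc_rev1 Hpc); apply: A.
- move=> H1 H2; split; first exact: (A3b HF H1 H2).
  split.
  + move=> Heq; have [N2z [N4e [N3e [N1e [m33z [EFt N4p]]]]]] := A3e HF H1 H2 Heq.
    split; first by split.
    apply: PC2 => //.
    * by apply: Hex4.
    * move=> _ [u [v /and3P [Huv Hu Hv]]].
      by move: (mm_pos Huv (eqP Hu) (eqP Hv)); rewrite m33z.
  + move=> [[_ H4' H3' H1'] Hpc].
    have [EFt _] := PCinv_F Hsym Hirr Hacyc Hpc.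
    by have [A _] := A34r HF H4' H3' H1' EFt (Hpc_rev2 Hpc) H1; apply: A.
- move=> H1; split; first exact: (A4b HF H1).
  split.
  + move=> Heq; have [N2z [N4e [N3e [N1e [m14z [EFt N4p]]]]]] := A4e HF H1 Heq.
    split; first by split.
    apply: PC2 => //.
    * by apply: Hex4.
    * move=> [u [v /and3P [Hu Huv Hv]]]; exfalso.
      by move: (mm_pos Huv (eqP Hu) (eqP Hv)); rewrite m14z.
  + move=> [[_ H4' H3' H1'] Hpc].
    have [EFt _] := PCinv_F Hsym Hirr Hacyc Hpc.
    have Hle : n <= 3 * b + 2 by case: HF => *; lia.
    by have [_ A] := A34r HF H4' H3' H1' EFt (Hpc_rev2 Hpc) Hle; apply: A.
Qed.
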